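(* Let $t\ge 1$ and let $\mathcal H$ be any 3-graph. Let $E_1$ be the set of pairs of vertices contained in at least one and at most $t$ hyperedges of $\mathcal H$, $E_2$ the set of pairs contained in at least $t+1$ and at most $2t$ hyperedges, and $E_3$ the set of pairs contained in at least $2t+1$ and at most $3t$ hyperedges. For $i=1,2,3$ let $\mathcal H_i$ be the set of hyperedges of $\mathcal H$ containing at least $i$ pairs from $E_i$, and let $\mathcal H_4$ be the set of hyperedges containing exactly one pair from $E_2$ and two pairs from $E_3$. Then $$|\mathcal H_1|+|\mathcal H_2|+|\mathcal H_3|+|\mathcal H_4|\le t\,(|E_1|+|E_2|+|E_3|).$$
   Context: A pair (2-subset) $e$ of vertices is said to be contained in a hyperedge $h$ if $e\subset h$. *)

(* Defs.v *)
From mathcomp Require Import all_boot.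
Set Implicit Arguments. Unset Strict Implicit. Unset Printing Implicit Defensive.

Definition is_3graph (T : finType) (H : {set {set T}}) : Prop :=
  forall h, h \in H -> #|h| = 3.

Definition codeg (T : finType) (H : {set {set T}}) (e : {set T}) : nat :=
  #|[set h in H | e \subset h]|.

Definition Eband (T : finType) (H : {set {set T}}) (lo hi : nat) : {set {set T}} :=
  [set e : {set T} | (#|e| == 2) && (lo <= codeg H e <= hi)].

Definition E1 (T : finType) (H : {set {set T}}) (t : nat) := Eband H 1 t.
Definition E2 (T : finType) (H : {set {set T}}) (t : nat) := Eband H t.+1 (2 * t).
Definition E3 (T : finType) (H : {set {set T}}) (t : nat) := Eband H (2 * t).+1 (3 * t).

Definition npairs (T : finType) (E : {set {set T}}) (h : {set T}) : nat :=
  #|[set e in E | e \subset h]|.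

Definition Hi (T : finType) (H : {set {set T}}) (E : {set {set T}}) (i : nat) :=
  [set h in H | i <= npairs E h].

Definition H4 (T : finType) (H : {set {set T}}) (t : nat) :=
  [set h in H | (npairs (E2 H t) h == 1) && (npairs (E3 H t) h == 2)].

(* Main.v *)
Require Import Defs.
From mathcomp Require Import all_boot.
From mathcomp Require Import zify.

Lemma card_sep (U : finType) (A : {set U}) (P : pred U) :
  #|[set x in A | P x]| = \sum_(x in A) P x.
Proof.
rewrite -sum1_card big_mkcond [RHS]big_mkcond /=; apply: eq_bigr => x _.
by rewrite inE; case: (x \in A); case: (P x).
Qed.

Lemma dbl (T : finType) (H E : {set {set T}}) :
  \sum_(e in E) codeg H e = \sum_(h in H) npairs E h.
Proof.
rewrite /codeg /npairs.
under eq_bigr do rewrite card_sep.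
under [RHS]eq_bigr do rewrite card_sep.
exact: exchange_big.
Qed.

Lemma band_sum (T : finType) (H : {set {set T}}) lo hi :
  \sum_(e in Eband H lo hi) codeg H e <= #|Eband H lo hi| * hi.
Proof.
rewrite -sum_nat_const; apply: leq_sum => e; rewrite inE.
by case/and3P.
Qed.

Lemma pairs3 (T : finType) (h : {set T}) : #|h| = 3 ->
  #|[set e : {set T} | (e \subset h) && (#|e| == 2)]| <= 3.
Proof.
move=> h3; rewrite -h3.
apply: leq_trans (leq_imset_card (fun x => h :\ x) h).
apply: subset_leq_card; apply/subsetP => e; rewrite inE => /andP [eh e2].
have : #|h :\: e| == 1 by rewrite cardsDS // h3 (eqP e2).
case/cards1P => x hx.
have xh : x \in h.
  have : x \in h :\: e by rewrite hx set11.
  by rewrite inE => /andP [].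
apply/imsetP; exists x => //.
by rewrite -hx setDDr setDv set0U; apply/esym/setIidPr.
Qed.

Lemma key (a1 a2 a3 : nat) : a1 + a2 + a3 <= 3 ->
  6 * ((1 <= a1) + (2 <= a2) + (3 <= a3) + ((a2 == 1) && (a3 == 2)))
  <= 6 * a1 + 3 * a2 + 2 * a3.
Proof.
case: a1 => [|[|[|[|a1]]]]; case: a2 => [|[|[|[|a2]]]];
  case: a3 => [|[|[|[|a3]]]] //=; lia.
Qed.

Lemma npairs_sum (T : finType) (H : {set {set T}}) t (h : {set T}) :
  #|h| = 3 ->
  npairs (E1 H t) h + npairs (E2 H t) h + npairs (E3 H t) h <= 3.
Proof.
move=> h3.
set P := [set e : {set T} | (e \subset h) && (#|e| == 2)].
apply: (@leq_trans #|P|); last exact: pairs3.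
have eqn : forall E : {set {set T}}, E \subset [set e : {set T} | #|e| == 2] ->
   npairs E h = \sum_(e in P) (e \in E).
  move=> E sE; rewrite /npairs -card_sep; apply: eq_card => e.
  rewrite !inE; apply/andP/andP => [[eE eh] | [/andP [eh _] eE]]; split => //.
  by rewrite eh /=; have := subsetP sE e eE; rewrite inE.
have sB : forall lo hi, Eband H lo hi \subset [set e : {set T} | #|e| == 2].
  by move=> lo hi; apply/subsetP => e; rewrite !inE => /andP [].
rewrite !eqn ?sB // -!big_split -sum1_card /=.
apply: leq_sum => e _; rewrite /E1 /E2 /E3 !inE.
case: (#|e| == 2) => //=.
case: (leqP 1 (codeg H e)); case: (leqP (codeg H e) t);
case: (leqP t.+1 (codeg H e)); case: (leqP (codeg H e) (2 * t));
case: (leqP (2 * t).+1 (codeg H e)); case: (leqP (codeg H e) (3 * t)) => //= *; lia.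
Qed.

Theorem claim1 (T : finType) (H : {set {set T}}) (t : nat) :
  1 <= t -> is_3graph H ->
  #|Hi H (E1 H t) 1| + #|Hi H (E2 H t) 2| + #|Hi H (E3 H t) 3| + #|H4 H t|
  <= t * (#|E1 H t| + #|E2 H t| + #|E3 H t|).
Proof.
move=> t1 H3.
rewrite /Hi /H4 !card_sep -!big_split /=.
rewrite -(leq_pmul2l (isT : 0 < 6)) big_distrr /=.
apply: (@leq_trans (\sum_(h in H) (6 * npairs (E1 H t) h + 3 * npairs (E2 H t) h
                                     + 2 * npairs (E3 H t) h))).
  apply: leq_sum => h hH; apply: key; exact: npairs_sum (H3 h hH).
have z : \sum_(i in H) 0 = 0 by rewrite big1.
rewrite !big_split /= -!dbl !z.
have b1 := @band_sum T H 1 t.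
have b2 := @band_sum T H t.+1 (2 * t).
have b3 := @band_sum T H (2 * t).+1 (3 * t).
rewrite /E1 /E2 /E3.
move: b1 b2 b3.
set S1 := \sum_(e in Eband H 1 t) codeg H e.
set S2 := \sum_(e in Eband H t.+1 (2 * t)) codeg H e.
set S3 := \sum_(e in Eband H (2 * t).+1 (3 * t)) codeg H e.
set c1 := #|Eband H 1 t|.
set c2 := #|Eband H t.+1 (2 * t)|.
set c3 := #|Eband H (2 * t).+1 (3 * t)|.
clearbody S1 S2 S3 c1 c2 c3.
nia.
Qed.
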